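(* Let $\alpha\in(0,1)\cup(1,\infty)$, $\beta=\alpha/(\alpha-1)$, and consider the $\alpha$-loss $\ell_\alpha(\mathrm{h},(x,y))=\beta\big(1-\mathrm{h}(y|x)^{1/\beta}\big)$, with score $L(\mathrm{q},y)=\beta(1-\mathrm{q}(y)^{1/\beta})$. Then, for $\mathbf{a},\mathbf{b}\in\mathbb{R}^m$, the problem $\mathscr{P}_{\ell_\alpha}^{\mathbf{a},\mathbf{b}}$ is equivalent to $$\mathscr{P}_{\alpha}^{\mathbf{a},\mathbf{b}}:\ \min_{\boldsymbol{\mu},\boldsymbol{\eta},\nu}\ \tfrac{1}{2}(\mathbf{b}-\mathbf{a})^{\mathrm{T}}\boldsymbol{\eta}-\tfrac{1}{2}(\mathbf{b}+\mathbf{a})^{\mathrm{T}}\boldsymbol{\mu}-\nu\ \text{ s.t. }\sum_{y\in\mathcal{Y}}\Big(\frac{\Phi(x,y)^{\mathrm{T}}\boldsymbol{\mu}+\nu}{\beta}+1\Big)_+^{\beta}\leq 1\ \forall x\in\mathcal{X},\ \boldsymbol{\eta}+\boldsymbol{\mu}\succeq\mathbf{0},\ \boldsymbol{\eta}-\boldsymbol{\mu}\succeq\mathbf{0}.$$ In addition, for a solution $\boldsymbol{\mu}^*,\boldsymbol{\eta}^*,\nu^*$ of $\mathscr{P}_{\alpha}^{\mathbf{a},\mathbf{b}}$, the condition $\ell_\alpha(\mathrm{h},(x,y))+\Phi(x,y)^{\mathrm{T}}\boldsymbol{\mu}^*+\nu^*\leq 0$ for all $x\in\mathcal{X},y\in\mathcal{Y}$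 (which makes $\mathrm{h}$ an $\ell_\alpha$-MRC for $\mathcal{U}^{\mathbf{a},\mathbf{b}}$) becomes $$\mathrm{h}(y|x)\geq \Big(\frac{\Phi(x,y)^{\mathrm{T}}\boldsymbol{\mu}^*+\nu^*}{\beta}+1\Big)_+^{\beta}\quad\forall x\in\mathcal{X},y\in\mathcal{Y}.$$
   Context: Let $\mathcal{X},\mathcal{Y}$ be finite nonempty sets, $\mathcal{Y}=\{1,\dots,|\mathcal{Y}|\}$; $\Delta(\mathcal{Y})$ is the set of probability distributions on $\mathcal{Y}$. A classification rule $\mathrm{h}$ assigns to each $x$ a distribution $\mathrm{h}(\cdot|x)\in\Delta(\mathcal{Y})$. For a score function $L$ with loss $\ell(\mathrm{h},(x,y))=L(\mathrm{h}(\cdot|x),y)$: $\Phi:\mathcal{X}\times\mathcal{Y}\to\mathbb{R}^m$ is a feature mapping, $\boldsymbol{\Phi}(x,\cdot)$ is the $|\mathcal{Y}|\times m$ matrix with rows $\Phi(x,y)^{\mathrm{T}}$, $\mathbf{1}$ the all-ones vector, $\preceq,\succeq$ componentwise, $\mathcal{L}=\{\mathbf{c}\in\mathbb{R}^{|\mathcal{Y}|}:\exists\,\mathrm{q}\in\Delta(\mathcal{Y}),\ \mathbf{c}+(L(\mathrm{q},y))_y\preceq\mathbf{0}\}$, and $\mathscr{P}_{\ell}^{\mathbf{a},\mathbf{b}}$ is $\min_{\boldsymbol{\mu},\boldsymbol{\eta},\nu}\tfrac12(\mathbf{b}-\mathbf{a})^{\mathrm{T}}\boldsymbol{\eta}-\tfrac12(\mathbf{b}+\mathbf{a})^{\mathrm{T}}\boldsymbol{\mu}-\nu$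 s.t. $\boldsymbol{\Phi}(x,\cdot)\boldsymbol{\mu}+\nu\mathbf{1}\in\mathcal{L}$ $\forall x$, $\boldsymbol{\eta}\pm\boldsymbol{\mu}\succeq\mathbf{0}$. $\mathcal{U}^{\mathbf{a},\mathbf{b}}=\{\mathrm{p}\in\Delta(\mathcal{X}\times\mathcal{Y}):\mathbf{a}\preceq\mathbb{E}_{\mathrm{p}}\{\Phi\}\preceq\mathbf{b}\}$; an $\ell$-MRC for $\mathcal{U}$ minimizes $\max_{\mathrm{p}\in\mathcal{U}}\sum_{x,y}\mathrm{p}(x,y)\ell(\mathrm{h},(x,y))$ over all classification rules. In expressions $(\cdot)_+^\beta$ the positive part is taken before the power. *)

(* Defs.v *)
From HB Require Import structures.
From mathcomp Require Import all_boot all_order all_algebra.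
From mathcomp Require Import all_classical all_reals all_analysis.
Set Implicit Arguments. Unset Strict Implicit. Unset Printing Implicit Defensive.
Import Order.TTheory GRing.Theory Num.Theory.
Local Open Scope ring_scope.

Section MRC.
Variables (R : realType) (X Y : finType) (m : nat).

Definition dotv (u v : 'cV[R]_m) : R := \sum_(i < m) u i 0 * v i 0.

Definition is_distr (q : Y -> R) : Prop :=
  (forall y, 0 <= q y) /\ \sum_(y : Y) q y = 1.

Definition is_rule (h : X -> Y -> R) : Prop := forall x, is_distr (h x).

(* (t)_+^p as an extended real: positive part taken first, then the power,
   with 0^p = 0 for p > 0 and 0^p = +oo for p < 0 (and 0^0 = 1). *)
Definition pospow (t p : R) : \bar R :=
  if 0 < t then (t `^ p)%:E
  else if 0 < p then 0%E else if p == 0 then 1%E else +oo%E.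

Definition in_Lset (L : (Y -> R) -> Y -> \bar R) (c : Y -> R) : Prop :=
  exists q, is_distr q /\ forall y, ((c y)%:E + L q y <= 0)%E.

Definition mrc_obj (a b mu eta : 'cV[R]_m) (nu : R) : R :=
  2^-1 * dotv (b - a) eta - 2^-1 * dotv (b + a) mu - nu.

Definition box_constr (mu eta : 'cV[R]_m) : Prop :=
  forall i, 0 <= eta i 0 + mu i 0 /\ 0 <= eta i 0 - mu i 0.

Definition feas_ell (L : (Y -> R) -> Y -> \bar R) (Phi : X -> Y -> 'cV[R]_m)
  (mu eta : 'cV[R]_m) (nu : R) : Prop :=
  (forall x, in_Lset L (fun y => dotv (Phi x y) mu + nu)) /\ box_constr mu eta.

Definition beta_of (alpha : R) : R := alpha / (alpha - 1).

Definition alpha_score (alpha : R) (q : Y -> R) (y : Y) : \bar R :=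
  ((beta_of alpha)%:E * (1 - pospow (q y) (beta_of alpha)^-1))%E.

Definition alpha_loss (alpha : R) (h : X -> Y -> R) (x : X) (y : Y) : \bar R :=
  alpha_score alpha (h x) y.

Definition feas_alpha (alpha : R) (Phi : X -> Y -> 'cV[R]_m)
  (mu eta : 'cV[R]_m) (nu : R) : Prop :=
  (forall x, (\sum_(y : Y)
      pospow ((dotv (Phi x y) mu + nu) / beta_of alpha + 1) (beta_of alpha)
      <= 1)%E) /\ box_constr mu eta.

Definition is_solution (feas : 'cV[R]_m -> 'cV[R]_m -> R -> Prop)
  (a b : 'cV[R]_m) (mu eta : 'cV[R]_m) (nu : R) : Prop :=
  feas mu eta nu /\
  forall mu' eta' nu', feas mu' eta' nu' ->
    mrc_obj a b mu eta nu <= mrc_obj a b mu' eta' nu'.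

End MRC.

(* Main.v *)
Require Import Defs.
From HB Require Import structures.
From mathcomp Require Import all_boot all_order all_algebra.
From mathcomp Require Import all_classical all_reals all_analysis.
From mathcomp Require Import ring lra.
Import Order.TTheory GRing.Theory Num.Theory.
Local Open Scope ring_scope.

Lemma powR_mono (R : realType) (s x y : R) : 0 < s -> 0 <= x -> 0 <= y ->
  (x <= y) = (x `^ s <= y `^ s).
Proof.
move=> s0 x0 y0; apply/idP/idP => H.
  by apply: ge0_ler_powR => //; [exact: ltW| rewrite nnegrE..].
have := @ge0_ler_powR R s^-1 _ (x `^ s) (y `^ s).
rewrite -!powRrM mulfV ?gt_eqF // !powRr1 //; apply.
- by rewrite invr_ge0 ltW.
- by rewrite nnegrE powR_ge0.
- by rewrite nnegrE powR_ge0.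
- done.
Qed.

Lemma powR_anti (R : realType) (r x y : R) : r < 0 -> 0 < x -> 0 < y ->
  (x <= y) = (y `^ r <= x `^ r).
Proof.
move=> r0 x0 y0.
have -> : r = - (- r) by rewrite opprK.
rewrite (powRN x (- r)) (powRN y (- r)) lef_pV2 ?posrE ?powR_gt0 //.
by rewrite -powR_mono ?oppr_gt0 // ltW.
Qed.

Lemma key (R : realType) (be c v : R) : be != 0 -> 0 <= v ->
  ((c%:E + be%:E * (1 - pospow v be^-1)) <= 0)%E <->
  (pospow (c / be + 1) be <= v%:E)%E.
Proof.
move=> be0 v0.
have E : c + be * (1 - v `^ be^-1) = be * ((c / be + 1) - v `^ be^-1).
  by field.
rewrite /pospow.
have [bp|bn] := ltP 0 be.
- have bip : 0 < be^-1 by rewrite invr_gt0.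
  rewrite bip.
  have [vp|vn] := ltP 0 v.
  + rewrite -EFinB -EFinM -EFinD lee_fin E pmulr_rle0 // subr_le0.
    have [tp|tn] := ltP 0 (c / be + 1).
    * rewrite lee_fin (@powR_mono _ be (c/be+1) (v `^ be^-1) bp) ?(ltW tp) ?powR_ge0 //.
      by rewrite -powRrM mulVf // powRr1.
    * by split => // _; apply: le_trans tn _; rewrite powR_ge0.
  + have -> : v = 0 by apply/le_anti; rewrite vn.
    rewrite sube0 -EFinM -EFinD lee_fin.
    have -> : c + be * 1 = be * (c / be + 1) by field.
    rewrite pmulr_rle0 //.
    have [tp|tn] := ltP 0 (c / be + 1).
    * split => // H; exfalso; move: H; rewrite lee_fin leNgt powR_gt0 //.
    * by split.
- have bn' : be < 0 by rewrite lt_neqAle be0 bn.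
  have bin : be^-1 < 0 by rewrite invr_lt0.
  rewrite (ltNge 0 be^-1) (ltW bin) /= (negbTE be0) invr_eq0 (negbTE be0).
  have [vp|vn] := ltP 0 v.
  + rewrite -EFinB -EFinM -EFinD lee_fin E nmulr_rle0 // subr_ge0.
    have [tp|tn] := ltP 0 (c / be + 1).
    * rewrite lee_fin (@powR_anti _ be _ _ bn') ?powR_gt0 //.
      by rewrite -powRrM mulVf // powRr1 // ltW.
    * split => H; exfalso.
        by move: (lt_le_trans (powR_gt0 be^-1 vp) H); rewrite ltNge tn.
      by move: H; rewrite leye_eq.
  + have -> : v = 0 by apply/le_anti; rewrite vn.
    have -> : (1 - +oo = -oo :> \bar R)%E by [].
    rewrite mulrNy ltr0_sg // mulN1e /= addey //.
    have [tp|tn] := ltP 0 (c / be + 1).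
    * by split => // H; exfalso; move: H; rewrite lee_fin leNgt powR_gt0.
    * by split.
Qed.

Lemma pospow_ge0 (R : realType) (t p : R) : (0 <= pospow t p)%E.
Proof.
rewrite /pospow; case: ifP => _; first by rewrite lee_fin powR_ge0.
case: ifP => _ //; case: ifP => _ //.
Qed.

Lemma beta_neq0 (R : realType) (alpha : R) : 0 < alpha -> alpha != 1 ->
  beta_of alpha != 0.
Proof.
move=> a0 a1; rewrite /beta_of mulf_neq0 //; first by rewrite gt_eqF.
by rewrite invr_eq0 subr_eq0.
Qed.

Lemma lset_iff (R : realType) (Y : finType) (y0 : Y) (alpha : R) (c : Y -> R) :
  0 < alpha -> alpha != 1 ->
  in_Lset (alpha_score alpha) c <->
  (\sum_(y : Y) pospow (c y / beta_of alpha + 1) (beta_of alpha) <= 1)%E.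
Proof.
move=> a0 a1; have b0 := @beta_neq0 _ _ a0 a1.
set be := beta_of alpha.
split.
- move=> [q [[q0 q1] Hq]].
  apply: (@le_trans _ _ (\sum_(y : Y) (q y)%:E)%E); last by rewrite sumEFin q1.
  apply: lee_sum => y _; apply/(@key _ _ _ _ b0 (q0 y)); exact: Hq.
- move=> Hs.
  set P := fun y => pospow (c y / be + 1) be.
  have Ple1 : forall y, (P y <= 1)%E.
    move=> y; apply: le_trans Hs.
    rewrite (bigD1 y) //= leeDl //; apply: sume_ge0 => z _; exact: pospow_ge0.
  have Pfin : forall y, P y \is a fin_num.
    move=> y; rewrite ge0_fin_numE ?pospow_ge0 //; exact: (le_lt_trans (Ple1 y) (ltry _)).
  set p := fun y => fine (P y).
  have pE : forall y, (p y)%:E = P y by move=> y; rewrite fineK.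
  have p0 : forall y, 0 <= p y by move=> y; rewrite -lee_fin pE pospow_ge0.
  have sp : \sum_(y : Y) p y <= 1.
    by rewrite -lee_fin -sumEFin; under eq_bigr => y _ do rewrite pE.
  pose q := fun y => p y + (y == y0)%:R * (1 - \sum_(z : Y) p z).
  exists q; split; first split.
  + move=> y; rewrite /q addr_ge0 // mulr_ge0 // ?ler0n // subr_ge0 //.
  + have S : forall k : R, \sum_(y : Y) (y == y0)%:R * k = k.
      move=> k; rewrite (bigD1 y0) //= eqxx mul1r big1 ?addr0 //.
      by move=> z /negbTE ->; rewrite mul0r.
    by rewrite /q big_split /= S addrCA subrr addr0.
  + move=> y; apply/(@key _ _ _ _ b0).
      by rewrite /q addr_ge0 // mulr_ge0 // ?ler0n // subr_ge0 //.
    rewrite -/(P y) -pE lee_fin /q lerDl mulr_ge0 // ?ler0n // subr_ge0 //.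
Qed.

Theorem corollary3 (R : realType) (X Y : finType) (m : nat)
  (x0 : X) (y0 : Y) (Phi : X -> Y -> 'cV[R]_m) (alpha : R)
  (halpha : 0 < alpha) (halpha1 : alpha != 1) (a b : 'cV[R]_m) :
  (* P_{ell_alpha}^{a,b} and P_alpha^{a,b}: same objective, same feasible set *)
  (forall mu eta nu,
     feas_ell (alpha_score alpha) Phi mu eta nu <-> feas_alpha alpha Phi mu eta nu) /\
  (* hence the same solutions *)
  (forall mu eta nu,
     is_solution (feas_ell (alpha_score alpha) Phi) a b mu eta nu <->
     is_solution (feas_alpha alpha Phi) a b mu eta nu) /\
  (* the MRC condition for a solution of P_alpha^{a,b} *)
  (forall mus etas nus, is_solution (feas_alpha alpha Phi) a b mus etas nus ->
     forall h : X -> Y -> R, is_rule h ->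
       ((forall x y,
           (alpha_loss alpha h x y + (dotv (Phi x y) mus + nus)%:E <= 0)%E) <->
        (forall x y,
           (pospow ((dotv (Phi x y) mus + nus) / beta_of alpha + 1) (beta_of alpha)
             <= (h x y)%:E)%E))).
Proof.
have F : forall mu eta nu,
    feas_ell (alpha_score alpha) Phi mu eta nu <-> feas_alpha alpha Phi mu eta nu.
  move=> mu eta nu; rewrite /feas_ell /feas_alpha; split => -[H1 H2]; split => // x.
    by apply/(@lset_iff _ _ y0 _ _ halpha halpha1); exact: H1.
  by apply/(@lset_iff _ _ y0 _ _ halpha halpha1); exact: H1.
split => //; split.
  move=> mu eta nu; rewrite /is_solution; split => -[H1 H2]; split.
  - by apply/F.
  - by move=> mu' eta' nu' /F; apply: H2.
  - by apply/F.
  - by move=> mu' eta' nu' /F; apply: H2.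
move=> mus etas nus _ h hr.
have b0 := @beta_neq0 _ _ halpha halpha1.
split => H x y.
  have := H x y; rewrite addeC /alpha_loss => /(@key _ _ _ _ b0 ((hr x).1 y)); done.
rewrite addeC; apply/(@key _ _ _ _ b0 ((hr x).1 y)); exact: H.
Qed.
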